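(* Let $K$ be an algebraically closed field and $\varphi:V\to V$ a $K$-linear map of a finite dimensional $K$-vector space $V$. Let $\{\lambda_1,\dots,\lambda_p\}\subseteq K$ be the set of all ($p$ distinct) eigenvalues of $\varphi$ and $m=\max\{\dim(\ker(\varphi-\lambda_i1_V))\mid1\le i\le p\}$. Then the centralizer $C_\varphi=\{\psi\in\mathrm{Hom}_K(V,V)\mid\psi\circ\varphi=\varphi\circ\psi\}$ satisfies all polynomial identities of the full matrix algebra $M_{m\times m}(K[t])$.
   Context: $K[t]$ is the polynomial ring over $K$ in one indeterminate. *)

(* Defs.v *)
From HB Require Import structures.
From mathcomp Require Import all_boot all_order all_algebra vector.
Set Implicit Arguments. Unset Strict Implicit. Unset Printing Implicit Defensive.
Import Order.TTheory GRing.Theory Num.Theory.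
Local Open Scope ring_scope.

(* Noncommutative polynomials with coefficients in K in the variables
   x_0, x_1, ... (elements of the free algebra K<x_0,x_1,...>), given as
   syntax trees: every element of the free algebra is represented. *)
Inductive ncpoly (K : Type) : Type :=
  | NCX of nat
  | NCC of K
  | NCAdd of ncpoly K & ncpoly K
  | NCMul of ncpoly K & ncpoly K.

Fixpoint nceval (K A : Type) (add mul : A -> A -> A) (c : K -> A)
    (e : nat -> A) (f : ncpoly K) : A :=
  match f with
  | NCX i => e i
  | NCC a => c a
  | NCAdd f g => add (nceval add mul c e f) (nceval add mul c e g)
  | NCMul f g => mul (nceval add mul c e f) (nceval add mul c e g)
  end.

Definition nceval_mx (K : fieldType) (m : nat) (e : nat -> 'M[{poly K}]_m)
    (f : ncpoly K) : 'M[{poly K}]_m :=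
  nceval (fun x y => x + y) (fun x y => x *m y) (fun a => (a%:P)%:M) e f.

Definition mx_poly_identity (K : fieldType) (m : nat) (f : ncpoly K) : Prop :=
  forall e : nat -> 'M[{poly K}]_m, nceval_mx e f = 0.

Definition nceval_End (K : fieldType) (vT : vectType K) (e : nat -> 'End(vT))
    (f : ncpoly K) : 'End(vT) :=
  nceval (fun x y => x + y) (fun x y => (x \o y)%VF) (fun a => a *: \1%VF) e f.

Definition centralizer (K : fieldType) (vT : vectType K) (phi : 'End(vT)) :
    pred 'End(vT) :=
  fun psi => (psi \o phi)%VF == (phi \o psi)%VF.

Definition eigenvalue (K : fieldType) (vT : vectType K) (phi : 'End(vT)) (a : K)
  : bool := lker (phi - a *: \1%VF) != 0%VS.

(* m = max { dim ker(phi - lambda 1_V) | lambda eigenvalue of phi }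
   (with max of the empty set = 0). *)
Definition max_eigdim (K : fieldType) (vT : vectType K) (phi : 'End(vT))
    (m : nat) : Prop :=
  (forall a, eigenvalue phi a -> leq (\dim (lker (phi - a *: \1%VF))) m) /\
  (m = 0%N \/ exists a, eigenvalue phi a /\ \dim (lker (phi - a *: \1%VF)) = m).

(* Main.v *)
From HB Require Import structures.
From mathcomp Require Import all_boot all_order all_algebra vector.
From Stdlib Require Import ClassicalEpsilon Classical Lia.
From mathcomp Require Import zify.
Set Implicit Arguments. Unset Strict Implicit. Unset Printing Implicit Defensive.
Import GRing.Theory.
Local Open Scope ring_scope.
Require Import Defs.
Section S.
Variables (K : closedFieldType) (vT : vectType K) (Hd : (0 < dim vT)%N) (phi : 'End(vT)).
Definition A := lfun_algType Hd.
Definition P (p : {poly K}) : 'End(vT) := horner_alg (phi : A) p.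
Lemma PD p q : P (p + q) = P p + P q.
Proof. by rewrite /P rmorphD. Qed.
Lemma PB p q : P (p - q) = P p - P q.
Proof. by rewrite /P rmorphB. Qed.
Lemma PM p q : P (p * q) = (P q \o P p)%VF.
Proof. by rewrite /P rmorphM. Qed.
Lemma PC c : P c%:P = c *: \1%VF.
Proof. by rewrite /P horner_algC. Qed.
Lemma PX : P 'X = phi.
Proof. by rewrite /P horner_algX. Qed.
Lemma P0 : P 0 = 0. Proof. by rewrite /P rmorph0. Qed.
Lemma P1 : P 1 = \1%VF. Proof. by rewrite /P rmorph1. Qed.
Lemma PZ c p : P (c *: p) = c *: P p.
Proof. by rewrite -mul_polyC PM PC -comp_lfunZr comp_lfun1r. Qed.
Lemma PMv p q v : P (p * q) v = P p (P q v).
Proof. by rewrite mulrC PM comp_lfunE. Qed.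
Lemma PDv p q v : P (p + q) v = P p v + P q v.
Proof. by rewrite PD add_lfunE. Qed.
Lemma PZv c p v : P (c *: p) v = c *: P p v.
Proof. by rewrite PZ scale_lfunE. Qed.
Lemma PCv c v : P c%:P v = c *: v.
Proof. by rewrite PC scale_lfunE id_lfunE. Qed.
Lemma PXv v : P 'X v = phi v.
Proof. by rewrite PX. Qed.
Lemma P0v v : P 0 v = 0.
Proof. by rewrite P0 zero_lfunE. Qed.
Lemma P1v v : P 1 v = v.
Proof. by rewrite P1 id_lfunE. Qed.
Lemma Psumv I (s : seq I) (F : I -> {poly K}) v :
  P (\sum_(i <- s) F i) v = \sum_(i <- s) P (F i) v.
Proof.
elim: s => [|i s IH]; first by rewrite !big_nil P0v.
by rewrite !big_cons PDv IH.
Qed.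

Lemma Pcomm psi : (psi \o phi = phi \o psi)%VF ->
  forall p v, psi (P p v) = P p (psi v).
Proof.
move=> H p v; elim/poly_ind: p => [|p c IH]; first by rewrite !P0v linear0.
rewrite !PDv !PCv mulrC !PMv !PXv linearD linearZ /=.
have := congr1 (fun f : 'End(vT) => f (P p v)) H; rewrite /= !comp_lfunE => ->.
by rewrite IH.
Qed.

Lemma Pinv (U : {vspace vT}) : (phi @: U <= U)%VS ->
  forall p u, u \in U -> P p u \in U.
Proof.
move=> HU p u Hu; elim/poly_ind: p => [|p c IH]; first by rewrite P0v mem0v.
rewrite PDv PCv mulrC PMv PXv memvD ?memvZ //.
exact: (subvP HU _ (memv_img phi IH)).
Qed.

Lemma peel (U : {vspace vT}) : (phi @: U <= U)%VS ->
  forall rs u, u \in U -> u != 0 ->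
  P (\prod_(z <- rs) ('X - z%:P)) u = 0 ->
  exists a v, [/\ v \in U, v != 0 & phi v = a *: v].
Proof.
move=> HU; elim=> [|z rs IH] u Hu u0; first by rewrite big_nil P1v => /eqP; rewrite (negbTE u0).
rewrite big_cons PMv.
have [w0|wn0] := eqVneq (P (\prod_(z <- rs) ('X - z%:P)) u) 0.
  by move=> _; apply: (IH u).
move=> H; exists z, (P (\prod_(z <- rs) ('X - z%:P)) u); split => //.
  exact: Pinv.
move: H; rewrite PB PX PC add_lfunE opp_lfunE scale_lfunE id_lfunE.
by move/eqP; rewrite subr_eq0 => /eqP.
Qed.

Lemma eigen_exists (U : {vspace vT}) : (phi @: U <= U)%VS -> U != 0%VS ->
  exists a v, [/\ v \in U, v != 0 & phi v = a *: v].
Proof.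
move=> HU U0.
set u := vpick U; have Hu : u \in U := memv_pick U.
have u0 : u != 0 by rewrite vpick0.
set d := \dim U.
pose X := [tuple P ('X^i) u | i < d.+1].
have nfree : ~~ free X.
  rewrite /free size_tuple; apply/negP => /eqP Hx.
  have : (<<X>> <= U)%VS.
    apply/span_subvP => x /mapP [i _ ->].
    exact: Pinv.
  move/dimvS; rewrite Hx -/d; by rewrite ltnn.
have : ~ (forall k : 'I_d.+1 -> K, \sum_(i < d.+1) k i *: X`_i = 0 -> forall i, k i = 0).
  by move=> H; move/negP: nfree; apply; apply/freeP.
move=> HH; have := not_all_ex_not _ _ HH.
case=> k H. have [Hs H2] := imply_to_and _ _ H.
have [i ki] := not_all_ex_not _ _ H2.
pose p := \sum_(j < d.+1) k j *: 'X^j.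
have Pp : P p u = 0.
  rewrite Psumv -[RHS]Hs; apply: eq_bigr => j _.
  by rewrite PZv nth_mktuple.
have p0 : p != 0.
  apply/eqP => Hp; apply: ki.
  have := congr1 (fun q : {poly K} => q`_i) Hp.
  rewrite coef0 /p coef_sum (bigD1 i) //= coefZ coefXn eqxx mulr1 big1 ?addr0 //.
  move=> j ji; rewrite coefZ coefXn.
  rewrite (_ : (i == j :> nat) = false) ?mulr0 //.
  by apply/eqP => Eij; case/eqP: ji; apply/val_inj.
have [rs Hrs] := closed_field_poly_normal p.
apply: (peel HU (rs := rs) Hu u0).
move: Pp; rewrite Hrs PZv => /eqP; rewrite scaler_eq0 lead_coef_eq0 (negbTE p0) /=.
by move/eqP; apply.
Qed.

Lemma Prv a v : P ('X - a%:P) v = phi v - a *: v.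
Proof. by rewrite PB add_lfunE opp_lfunE PX PC scale_lfunE id_lfunE. Qed.

Lemma subv_eq_or (A B : {vspace vT}) : (A <= B)%VS -> A = B \/ (\dim A < \dim B)%N.
Proof.
move=> HAB; case: (eqVneq A B) => [->|ne]; [by left | right].
rewrite ltnNge; apply: contra ne => Hle; by rewrite eqEdim HAB Hle.
Qed.

Lemma dim_gt0 (W : {vspace vT}) v : v \in W -> v != 0 -> (0 < \dim W)%N.
Proof.
move=> Hv v0; rewrite lt0n dimv_eq0; apply: contra v0 => /eqP W0.
by rewrite -memv0 -W0.
Qed.

Lemma Pimg (U : {vspace vT}) p : (phi @: U <= U)%VS -> (P p @: U <= U)%VS.
Proof. by move=> HU; apply/subvP => x /memv_imgP [w Hw ->]; exact: Pinv. Qed.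

Lemma decomp (F : 'End(vT)) :
  (forall a v, P (('X - a%:P) ^+ dim vT) v = 0 -> F v = 0) ->
  forall U, (phi @: U <= U)%VS -> forall u, u \in U -> F u = 0.
Proof.
move=> HF.
suff: forall k U, (\dim U <= k)%N -> (phi @: U <= U)%VS -> forall u, u \in U -> F u = 0.
  by move=> H U; apply: (H _ U (leqnn _)).
elim=> [|k IH] U HdU HU u Hu.
  move: HdU; rewrite leqn0 dimv_eq0 => /eqP U0.
  by move: Hu; rewrite U0 memv0 => /eqP ->; rewrite linear0.
have [U0|Un0] := eqVneq U 0%VS.
  by move: Hu; rewrite U0 memv0 => /eqP ->; rewrite linear0.
have [a [v [Hv v0 Hphiv]]] := eigen_exists HU Un0.
set r := 'X - a%:P; set n := dim vT.
pose T j := (P (r ^+ j) @: U)%VS.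
have Hrv : P r v = 0 by rewrite Prv Hphiv subrr.
have HrU : (P r @: U <= U)%VS := Pimg r HU.
have Tsub : forall j, (T j.+1 <= T j)%VS.
  by move=> j; rewrite /T exprS PM limg_comp limgS.
have Tstep : forall j, T j.+1 = (P r @: T j)%VS.
  by move=> j; rewrite /T exprSr PM limg_comp.
have chain : forall j, T j = T j.+1 \/ (\dim (T j.+1) + j.+1 <= \dim U)%N.
  elim=> [|j IHj].
    have T0 : T 0 = U by rewrite /T expr0 P1 lim1g.
    case: (subv_eq_or (Tsub 0)) => [<-|]; first by left.
    by rewrite T0 addn1 => ?; right.
  case: IHj => [E|Hd1].
    by left; rewrite [T j.+2]Tstep {1}Tstep E.
  case: (subv_eq_or (Tsub j.+1)) => [E|Hlt]; first by left.
  right; move: Hd1 Hlt; lia.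
have HdUn : (\dim U <= n)%N by rewrite /n -dimvf dimvS ?subvf.
have stable : T n = T n.+1.
  case: (chain n) => // H; move: H HdUn; lia.
have stable2 : forall j, T n = T (n + j)%N.
  elim=> [|j IHj]; first by rewrite addn0.
  by rewrite addnS Tstep -IHj -Tstep.
pose M := P (r ^+ n).
have HMu : M u \in T (n + n)%N by rewrite -stable2; apply: memv_img.
case/memv_imgP: HMu => u' Hu' HMu.
rewrite exprD PMv in HMu.
have -> : u = (u - M u') + M u' by rewrite subrK.
rewrite linearD /=.
have -> : F (u - M u') = 0.
  by apply: (HF a); rewrite linearB /= -/M HMu subrr.
rewrite add0r.
apply: (IH (T n)); last by apply: memv_img.
  have Hn : (0 < n)%N by [].
  have HMv : M v = 0.
    by rewrite /M -(prednK Hn) exprSr PMv Hrv linear0.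
  have := limg_ker_dim M U.
  have : (0 < \dim (U :&: lker M))%N.
    apply: (dim_gt0 (v := v)) => //.
    by rewrite memv_cap Hv memv_ker HMv eqxx.
  rewrite -/(T n); move: HdU; lia.
apply/subvP => x /memv_imgP [w Hw ->].
case/memv_imgP: Hw => w' Hw' ->.
rewrite Pcomm //.
apply: memv_img; exact: (subvP HU _ (memv_img phi Hw')).
Qed.

Lemma gen a m : leq (\dim (lker (phi - a *: \1%VF))) m ->
  exists w : 'I_m -> vT, (forall j, P (('X - a%:P) ^+ dim vT) (w j) = 0) /\
   forall v, P (('X - a%:P) ^+ dim vT) v = 0 ->
     exists q : 'I_m -> {poly K}, v = \sum_j P (q j) (w j).
Proof.
move=> Hm.
set r := 'X - a%:P; set n := dim vT.
pose M := P (r ^+ n); pose N := P r.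
pose Vl := lker M.
have HN : (N @: Vl <= Vl)%VS.
  apply/subvP => x /memv_imgP [y Hy ->].
  rewrite memv_ker /M /N -PMv mulrC PMv.
  by move: Hy; rewrite memv_ker => /eqP ->; rewrite linear0.
pose W := (Vl :\: (N @: Vl))%VS.
have HW : (W + N @: Vl)%VS = Vl.
  by rewrite -{2}(addv_diff_cap Vl (N @: Vl)) (capv_idPr HN).
have HNe : N = (phi - a *: \1)%VF by rewrite /N /r PB PX PC.
have dimW : (\dim W <= m)%N.
  have h1 := dimv_cap_compl Vl (N @: Vl).
  have h2 := limg_ker_dim N Vl.
  rewrite (capv_idPr HN) in h1.
  have h3 : (\dim (Vl :&: lker N) <= m)%N.
    by apply: leq_trans Hm; rewrite -HNe dimvS ?capvSr.
  rewrite /W; move: h1 h2 h3; lia.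
pose s := vbasis W ++ nseq (m - \dim W) (0 : vT).
have Hs : size s == m by rewrite size_cat size_tuple size_nseq subnKC.
pose X := Tuple Hs.
pose w (j : 'I_m) := X`_j.
have HX : forall x, x \in (X : seq vT) -> x \in W.
  move=> x; rewrite /X /s /= mem_cat => /orP [/vbasis_mem //|].
  by rewrite mem_nseq => /andP [_ /eqP ->]; rewrite mem0v.
have Hw : forall j, w j \in Vl.
  move=> j; apply: (subvP (diffvSl Vl (N @: Vl))); apply: HX.
  by apply: mem_nth; rewrite size_tuple ltn_ord.
have HWspan : forall y, y \in W -> y = \sum_j coord X j y *: X`_j.
  move=> y Hy; apply: coord_span.
  rewrite -(span_basis (vbasisP W)) in Hy.
  apply: (subvP (sub_span _) _ Hy) => x Hx; by rewrite /= mem_cat Hx.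
have main : forall k v, v \in Vl -> exists q : 'I_m -> {poly K}, exists v',
    v' \in Vl /\ v = \sum_j P (q j) (w j) + P (r ^+ k) v'.
  elim=> [|k IH] v Hv.
    exists (fun _ => 0), v; split => //.
    by rewrite big1 ?add0r ?expr0 ?P1v // => j _; rewrite P0v.
  have [q [v' [Hv' ->]]] := IH v Hv.
  move: Hv'; rewrite -HW => /memv_addP [y Hy [z Hz ->]].
  case/memv_imgP: Hz => v'' Hv'' ->.
  exists (fun j => q j + coord X j y *: r ^+ k), v''; split; first by rewrite HW.
  rewrite linearD /= {1}(HWspan y Hy) linear_sum /=.
  rewrite exprSr PMv -/N addrA; congr (_ + _).
  rewrite -big_split /=; apply: eq_bigr => j _.
  by rewrite PDv PZv linearZ.
move: (main n) => main'.
exists w; split.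
  by move=> j; apply/eqP; rewrite -memv_ker.
move=> v Hv.
have HvV : v \in Vl by rewrite memv_ker /M Hv.
have [q [v' [Hv' ->]]] := main' v HvV.
exists q; move: Hv'; rewrite memv_ker => /eqP ->; by rewrite addr0.
Qed.

Section Rep.
Variable m : nat.
Variable w : 'I_m -> vT.
Definition pi (x : 'cV[{poly K}]_m) : vT := \sum_j P (x j 0) (w j).
Definition Rep (B : 'M[{poly K}]_m) (psi : 'End(vT)) :=
  forall x, pi (B *m x) = psi (pi x).

Lemma pi_add x y : pi (x + y) = pi x + pi y.
Proof. by rewrite /pi -big_split; apply: eq_bigr => j _; rewrite mxE PDv. Qed.

Lemma pi0 : pi 0 = 0.
Proof. by rewrite /pi big1 // => j _; rewrite mxE P0v. Qed.

Lemma Rep_add A B psi chi : Rep A psi -> Rep B chi -> Rep (A + B) (psi + chi).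
Proof. by move=> HA HB x; rewrite mulmxDl pi_add HA HB add_lfunE. Qed.

Lemma Rep_mul A B psi chi : Rep A psi -> Rep B chi -> Rep (A *m B) (psi \o chi)%VF.
Proof. by move=> HA HB x; rewrite -mulmxA HA HB comp_lfunE. Qed.

Lemma Rep_const c : Rep (c%:P)%:M (c *: \1%VF).
Proof.
move=> x; rewrite mul_scalar_mx scale_lfunE id_lfunE /pi scaler_sumr.
by apply: eq_bigr => j _; rewrite mxE PMv PCv.
Qed.

Lemma Rep_exists (g : {poly K}) psi : (psi \o phi = phi \o psi)%VF ->
  (forall v, P g v = 0 -> exists q : 'I_m -> {poly K}, v = \sum_j P (q j) (w j)) ->
  (forall j, P g (w j) = 0) ->
  exists B, Rep B psi.
Proof.
move=> Hc Hgen Hw.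
have Hex : forall j : 'I_m, exists q : 'I_m -> {poly K}, psi (w j) = \sum_i P (q i) (w i).
  move=> j; apply: Hgen; by rewrite -Pcomm // Hw linear0.
pose Q j := proj1_sig (constructive_indefinite_description _ (Hex j)).
have HQ : forall j, psi (w j) = \sum_i P (Q j i) (w i).
  move=> j; exact: (proj2_sig (constructive_indefinite_description _ (Hex j))).
exists (\matrix_(i, j) Q j i) => x.
rewrite /pi.
under eq_bigr => i _ do rewrite mxE Psumv.
rewrite exchange_big linear_sum /=; apply: eq_bigr => j _.
rewrite Pcomm // HQ linear_sum /=; apply: eq_bigr => i _.
by rewrite mxE mulrC PMv.
Qed.
End Rep.
End S.

Lemma Rep_eval (K : closedFieldType) (vT : vectType K) (Hd : (0 < dim vT)%N)
  (phi : 'End(vT)) m (w : 'I_m -> vT) (e : nat -> 'End(vT))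
  (e' : nat -> 'M[{poly K}]_m) :
  (forall i, Rep Hd phi w (e' i) (e i)) ->
  forall f, Rep Hd phi w (nceval_mx e' f) (nceval_End e f).
Proof.
move=> He; elim=> [i|c|f IHf g IHg|f IHf g IHg] /=.
- exact: He.
- exact: Rep_const.
- exact: Rep_add.
- exact: Rep_mul.
Qed.

Theorem corollary5p3 (K : closedFieldType) (vT : vectType K) (phi : 'End(vT))
    (m : nat) :
  max_eigdim phi m ->
  forall f : ncpoly K, mx_poly_identity m f ->
  forall e : nat -> 'End(vT), (forall i, e i \in centralizer phi) ->
  nceval_End e f = 0.
Proof.
move=> [Hmax _] f Hf e He.
apply/lfunP => v; rewrite zero_lfunE.
have [Hz|H0] := posnP (dim vT).
  have : v \in (fullv : {vspace vT}) by rewrite memvf.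
  have -> : (fullv : {vspace vT}) = 0%VS.
    by apply/eqP; rewrite -dimv_eq0 dimvf Hz.
  by rewrite memv0 => /eqP ->; rewrite linear0.
apply: (decomp (F := nceval_End e f) (Hd := H0) (phi := phi) _ (U := fullv)).
- move=> a u Hu.
  have Hm : leq (\dim (lker (phi - a *: \1%VF))) m.
    case: (boolP (eigenvalue phi a)) => [/Hmax //|].
    by rewrite /eigenvalue negbK => /eqP ->; rewrite dimv0.
  have [w [Hw Hgen]] := gen H0 Hm.
  have Hex : forall i, exists B, Rep H0 phi w B (e i).
    move=> i; apply: (Rep_exists (g := ('X - a%:P) ^+ dim vT)) => //.
    by apply/eqP; exact: (He i).
  pose e' i := proj1_sig (constructive_indefinite_description _ (Hex i)).
  have He' : forall i, Rep H0 phi w (e' i) (e i).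
    move=> i; exact: (proj2_sig (constructive_indefinite_description _ (Hex i))).
  have HR := Rep_eval He' f.
  rewrite (Hf e') in HR.
  have [q ->] := Hgen u Hu.
  have := HR (\col_j q j); rewrite mul0mx pi0 /pi.
  under eq_bigr => j _ do rewrite mxE.
  by move=> <-.
- exact: subvf.
- exact: memvf.
Qed.
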